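(* Let $\mu$ be a Borel probability measure on $[0,1]^k$, let $\mathcal E_1,\mathcal E_2,\dots$ be bounded Borel subsets of $\mathbb R^k$, put $\mathcal E_\infty=\limsup_{n\to\infty}\mathcal E_n$, and let $C\geqslant1$. For each $n$ let $f_n:\mathbb R^k\to[0,\infty)$ be bounded, measurable and supported on $\mathcal E_n$. Suppose the ETP and VTP hold for $(f_n)$ and $\mu$, that $\sum_{n=1}^\infty\lambda(f_n)=\infty$, and that \[ \sum_{m,n\leqslant N}\lambda(f_mf_n)\leqslant C\,E_N(\lambda)^2+O(1)\qquad(N\in\mathbb N). \] Then $\mu(\mathcal E_\infty)\geqslant1/C$.
   Context: $\lambda$ denotes Lebesgue measure on $[0,1]^k$, and for a measure $\nu$ on $[0,1]^k$, $\nu(f)=\int_{[0,1]^k}f\,d\nu$. Put \[ E_N(\nu)=\sum_{n\leqslant N}\nu(f_n),\qquad V_N(\nu)=\int_{[0,1]^k}\Big(\sum_{n\leqslant N}(f_n(\mathbf x)-\lambda(f_n))\Big)^2d\nu(\mathbf x). \] The expectation transference principle (ETP) holds if $E_N(\mu)=(1+o(1))E_N(\lambda)+O(1)$ as $N\to\infty$. The variance transference principle (VTP) holds if $V_N(\mu)=V_N(\lambda)+o(E_N(\mu)^2)+O(1)$ along some sequence of $N\to\infty$. *)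

(* Defs.v *)
From HB Require Import structures.
From mathcomp Require Import all_boot all_order all_algebra.
From mathcomp Require Import all_classical all_reals all_analysis.
Set Implicit Arguments. Unset Strict Implicit. Unset Printing Implicit Defensive.
Import Order.TTheory GRing.Theory Num.Theory.
Import numFieldNormedType.Exports.
Local Open Scope classical_set_scope.
Local Open Scope ring_scope.

(* Points of R^k are k-tuples of reals; k.-tuple R carries the product
   (= Borel) sigma-algebra generated by the coordinate projections. *)

Definition cube (R : realType) (k : nat) : set (k.-tuple R) :=
  [set x | forall i : 'I_k, 0 <= tnth x i <= 1].

Definition box (R : realType) (k : nat) (a b : k.-tuple R) : set (k.-tuple R) :=
  [set x | forall i : 'I_k, tnth a i <= tnth x i <= tnth b i].

(* lam is k-dimensional Lebesgue measure (on the Borel sets of R^k):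
   it gives every box its volume. This characterizes it uniquely. *)
Definition is_lebesgue (R : realType) (k : nat)
  (lam : set (k.-tuple R) -> \bar R) : Prop :=
  forall a b : k.-tuple R, (forall i, tnth a i <= tnth b i) ->
    lam (box a b) = (\prod_(i < k) (tnth b i - tnth a i))%:E.

Definition bounded_tset (R : realType) (k : nat) (E : set (k.-tuple R)) : Prop :=
  exists M : R, forall x, E x -> forall i : 'I_k, `|tnth x i| <= M.

Definition nuf (R : realType) (k : nat) (nu : {measure set (k.-tuple R) -> \bar R})
  (f : k.-tuple R -> R) : R := Rintegral nu (@cube R k) f.

(* E_N(nu) = sum_{n <= N} nu(f_n); f_n is (f (n-1)), i.e. sum over n < N *)
Definition EN (R : realType) (k : nat) (nu : {measure set (k.-tuple R) -> \bar R})
  (f : nat -> k.-tuple R -> R) (N : nat) : R :=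
  \sum_(n < N) nuf nu (f n).

Definition VN (R : realType) (k : nat) (lam nu : {measure set (k.-tuple R) -> \bar R})
  (f : nat -> k.-tuple R -> R) (N : nat) : R :=
  Rintegral nu (@cube R k)
    (fun x => (\sum_(n < N) (f n x - nuf lam (f n))) ^+ 2).

Definition ETP (R : realType) (k : nat) (lam mu : {measure set (k.-tuple R) -> \bar R})
  (f : nat -> k.-tuple R -> R) : Prop :=
  exists (a b : nat -> R),
    a @ \oo --> (0 : R) /\
    (exists M : R, \forall N \near \oo, `|b N| <= M) /\
    \forall N \near \oo, EN mu f N = (1 + a N) * EN lam f N + b N.

Definition VTP (R : realType) (k : nat) (lam mu : {measure set (k.-tuple R) -> \bar R})
  (f : nat -> k.-tuple R -> R) : Prop :=
  exists (Ns : nat -> nat) (a b : nat -> R),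
    {homo Ns : i j / (i < j)%N} /\
    a @ \oo --> (0 : R) /\
    (exists M : R, \forall j \near \oo, `|b j| <= M) /\
    \forall j \near \oo,
      VN lam mu f (Ns j) = VN lam lam f (Ns j) + a j * (EN mu f (Ns j)) ^+ 2 + b j.

(* Main.v *)
Require Import Defs.
From HB Require Import structures.
From mathcomp Require Import all_boot all_order all_algebra.
From mathcomp Require Import all_classical all_reals all_analysis.
From mathcomp Require Import measurable_realfun.
From mathcomp Require Import ring lra zify.
Import Order.TTheory GRing.Theory Num.Theory.
Import numFieldNormedType.Exports.
Local Open Scope classical_set_scope.
Local Open Scope ring_scope.

Lemma cube_meas (R : realType) (k : nat) : measurable (@cube R k).
Proof.
have -> : @cube R k = \bigcap_(i in [set: 'I_k]) ((fun x => tnth x i) @^-1` `[0, 1]).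
  apply/seteqP; split => x /=.
    by move=> H i _ /=; rewrite in_itv /=; exact: H.
  by move=> H i; have := H i I; rewrite /= in_itv.
apply: fin_bigcap_measurable => [|i _]; first exact: finite_finset.

by rewrite -[X in measurable X]setTI; apply: measurable_tnth => //.
Qed.

Definition bm (R : realType) (k : nat) (g : k.-tuple R -> R) :=
  measurable_fun setT g /\ exists M : R, forall x, `|g x| <= M.
Arguments bm {R k}.

Lemma bm_int (R : realType) (k : nat) (nu : {measure set (k.-tuple R) -> \bar R})
  (g : k.-tuple R -> R) : (nu (@cube R k) < +oo)%E -> bm g ->
  nu.-integrable (@cube R k) (EFin \o g).
Proof.
move=> nfin [mg [M hM]].
have mg' : measurable_fun (@cube R k) (EFin \o g).
  apply/measurable_EFinP; apply: (measurable_funS measurableT) mg => //; exact: cube_meas.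
apply/integrableP; split; first exact: mg'.
apply: le_lt_trans.
  apply: (integral_le_bound (`|M|)%:E) => //; first exact: cube_meas.
  by apply: aeW => z _ /=; rewrite lee_fin (le_trans (hM z)) // ler_norm.
by rewrite lte_mul_pinfty.
Qed.

Lemma lam_cube (R : realType) (k : nat) (lam : {measure set (k.-tuple R) -> \bar R}) :
  is_lebesgue lam -> lam (@cube R k) = 1%E.
Proof.
move=> hl.
have -> : @cube R k = box [tuple (0:R) | i < k] [tuple (1:R) | i < k].
  by apply/seteqP; split => x /= H i; rewrite ?tnth_mktuple; have := H i; rewrite ?tnth_mktuple.
rewrite hl; last by move=> i; rewrite !tnth_mktuple ler01.
by rewrite big1 // => i _; rewrite !tnth_mktuple subr0.
Qed.

Lemma bm_cst (R : realType) (k : nat) (c : R) : bm (fun _ : k.-tuple R => c).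
Proof. by split => //; exists `|c|. Qed.

Lemma bm_add (R : realType) (k : nat) (g h : k.-tuple R -> R) :
  bm g -> bm h -> bm (fun x => g x + h x).
Proof.
move=> [mg [M hM]] [mh [N hN]]; split; first exact: measurable_funD.
by exists (M + N) => x; rewrite (le_trans (ler_normD _ _)) // lerD.
Qed.

Lemma bm_mul (R : realType) (k : nat) (g h : k.-tuple R -> R) :
  bm g -> bm h -> bm (fun x => g x * h x).
Proof.
move=> [mg [M hM]] [mh [N hN]]; split; first exact: measurable_funM.
exists (M * N) => x; rewrite normrM ler_pM //.
Qed.

Lemma bm_opp (R : realType) (k : nat) (g : k.-tuple R -> R) :
  bm g -> bm (fun x => - g x).
Proof.
move=> [mg [M hM]]; split; last by exists M => x; rewrite normrN.
have -> : (fun x => - g x) = (fun x => (-1) * g x) by apply: funext => x; rewrite mulN1r.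
by apply: measurable_funM => //.
Qed.

Lemma bm_sum (R : realType) (k : nat) (N : nat) (F : nat -> k.-tuple R -> R) :
  (forall i, bm (F i)) -> bm (fun x => \sum_(i < N) F i x).
Proof.
move=> hF; elim: N => [|N IH].
  have -> : (fun x : k.-tuple R => \sum_(i < 0) F i x) = (fun _ => 0) by apply: funext => x; rewrite big_ord0.
  exact: bm_cst.
have -> : (fun x => \sum_(i < N.+1) F i x) = (fun x => \sum_(i < N) F i x + F N x).
  by apply: funext => x; rewrite big_ord_recr.
exact: bm_add.
Qed.

Lemma Rint_sum (R : realType) (k : nat) (nu : {measure set (k.-tuple R) -> \bar R})
  (N : nat) (F : nat -> k.-tuple R -> R) :
  (nu (@cube R k) < +oo)%E -> (forall i, bm (F i)) ->
  Rintegral nu (@cube R k) (fun x => \sum_(i < N) F i x) =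
  \sum_(i < N) Rintegral nu (@cube R k) (F i).
Proof.
move=> nfin hF; elim: N => [|N IH].
  rewrite big_ord0 (@eq_Rintegral _ _ _ nu _ (fun _ => 0)); last by move=> x _; rewrite big_ord0.
  by rewrite Rintegral_cst ?mul0r //; exact: cube_meas.

rewrite [RHS]big_ord_recr /= [LHS](@eq_Rintegral _ _ _ nu _ (fun x => \sum_(i < N) F i x + F N x));
  last by move=> x _ /=; rewrite big_ord_recr.
rewrite RintegralD ?IH //; first exact: cube_meas.
- by apply: bm_int => //; exact: bm_sum.
- exact: bm_int.
Qed.

Lemma bm_sq (R : realType) (k : nat) (g : k.-tuple R -> R) :
  bm g -> bm (fun x => g x ^+ 2).
Proof.
move=> hg; have -> : (fun x => g x ^+ 2) = (fun x => g x * g x).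
  by apply: funext => x; rewrite expr2.
exact: bm_mul.
Qed.

Lemma VN_expand (R : realType) (k : nat) (lam nu : {measure set (k.-tuple R) -> \bar R})
  (f : nat -> k.-tuple R -> R) (N : nat) :
  nu (@cube R k) = 1%E -> (forall n, bm (f n)) ->
  VN lam nu f N = Rintegral nu (@cube R k) (fun x => (\sum_(n < N) f n x) ^+ 2)
     - 2 * EN lam f N * EN nu f N + EN lam f N ^+ 2.
Proof.
move=> n1 hf; rewrite /VN.
have nfin : (nu (@cube R k) < +oo)%E by rewrite n1 ltry.
have bS : bm (fun x => \sum_(n < N) f n x) by exact: bm_sum.
rewrite (@eq_Rintegral _ _ _ nu _ (fun x => (\sum_(n < N) f n x) ^+ 2 +
   (- (2 * EN lam f N)) * (\sum_(n < N) f n x) + EN lam f N ^+ 2)); last first.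
  by move=> x _ /=; rewrite sumrB /EN; ring.
have cm := @cube_meas R k.
rewrite RintegralD //; last first.
- by apply: bm_int => //; exact: bm_cst.
- apply: bm_int => //; apply: bm_add; first exact: bm_sq.
  by apply: bm_mul => //; exact: bm_cst.
rewrite RintegralD //; last first.
- by apply: bm_int => //; apply: bm_mul => //; exact: bm_cst.
- by apply: bm_int => //; exact: bm_sq.
rewrite RintegralZl //; last exact: bm_int.
rewrite Rintegral_cst // n1 /= mulr1 Rint_sum //.
rewrite /EN /nuf; ring.
Qed.

Lemma Rint_sq (R : realType) (k : nat) (nu : {measure set (k.-tuple R) -> \bar R})
  (f : nat -> k.-tuple R -> R) (N : nat) :
  (nu (@cube R k) < +oo)%E -> (forall n, bm (f n)) ->
  Rintegral nu (@cube R k) (fun x => (\sum_(n < N) f n x) ^+ 2) =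
  \sum_(m < N) \sum_(n < N) nuf nu (fun x => f m x * f n x).
Proof.
move=> nfin hf.
rewrite (@eq_Rintegral _ _ _ nu _ (fun x => \sum_(m < N) (\sum_(n < N) f m x * f n x))); last first.
  move=> x _ /=; rewrite expr2 mulr_suml; apply: eq_bigr => m _; by rewrite mulr_sumr.
rewrite (@Rint_sum _ _ nu N (fun m x => \sum_(n < N) f m x * f n x)) //; last by move=> m; apply: (@bm_sum _ _ N (fun n x => f m x * f n x)) => n; exact: bm_mul.
apply: eq_bigr => m _; rewrite /nuf (@Rint_sum _ _ nu N (fun n x => f m x * f n x)) //.
by move=> n; exact: bm_mul.
Qed.

Lemma sum_split (R : realType) (g : nat -> R) (M N : nat) : (M <= N)%N ->
  \sum_(n < N) g n = \sum_(n < M) g n + \sum_(M <= n < N) g n.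
Proof.
move=> MN; rewrite -!(big_mkord xpredT) (big_cat_nat (leq0n M) MN) //.
Qed.

Lemma amgm (R : realType) (s a : R) : 0 < a -> s <= s ^+ 2 / (2 * a) + a / 2.
Proof.
move=> a0.
have -> : s ^+ 2 / (2 * a) + a / 2 = s + (s - a) ^+ 2 / (2 * a).
  by field; rewrite gt_eqF.
by rewrite lerDl divr_ge0 // ?sqr_ge0 // mulr_ge0 // ltW.
Qed.

Lemma key (R : realType) (k : nat) (nu : {measure set (k.-tuple R) -> \bar R})
  (f : nat -> k.-tuple R -> R) (E : nat -> set (k.-tuple R)) (M N : nat) (a : R) :
  (nu (@cube R k) < +oo)%E -> (forall n, bm (f n)) -> (forall n x, 0 <= f n x) ->
  (forall n x, ~ E n x -> f n x = 0) -> (forall n, measurable (E n)) ->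
  (M <= N)%N -> 0 < a ->
  EN nu f N - EN nu f M <=
  Rintegral nu (@cube R k) (fun x => (\sum_(n < N) f n x) ^+ 2) / (2 * a)
  + a / 2 * fine (nu ((\bigcup_(j >= M) E j) `&` (@cube R k))).
Proof.
move=> nfin hf f0 hE mE MN a0.
set U := \bigcup_(j >= M) E j.
have cm := @cube_meas R k.
have mU : measurable U by apply: bigcup_measurable => j _; exact: mE.
have bI : bm (\1_U : k.-tuple R -> R).
  split; first exact: measurable_indic.
  by exists 1 => x; rewrite indicE; case: (x \in U); rewrite ?normr1 ?normr0.
have eI : fine (nu (U `&` @cube R k)) = Rintegral nu (@cube R k) (\1_U : k.-tuple R -> R).
  by rewrite /Rintegral integral_indic.
have eN : EN nu f N = Rintegral nu (@cube R k) (fun x => \sum_(n < N) f n x).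
  by rewrite Rint_sum.
have eM : EN nu f M = Rintegral nu (@cube R k) (fun x => \sum_(n < M) f n x).
  by rewrite Rint_sum.
have bSN : bm (fun x => \sum_(n < N) f n x) by exact: bm_sum.
have bSM : bm (fun x => \sum_(n < M) f n x) by exact: bm_sum.
rewrite eN eM eI -RintegralB //; try by apply: bm_int.
rewrite -RintegralZr //; last by apply: bm_int => //; exact: bm_sq.
rewrite -RintegralZl //; last by apply: bm_int.
rewrite -RintegralD //; first last.
- by apply: bm_int => //; apply: bm_mul => //; exact: bm_cst.
- by apply: bm_int => //; apply: bm_mul => //; [exact: bm_sq | exact: bm_cst].
apply: le_Rintegral => //.
- by apply: bm_int => //; apply: bm_add => //; exact: bm_opp.
- apply: bm_int => //; apply: bm_add.
    by apply: bm_mul => //; [exact: bm_sq | exact: bm_cst].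
  by apply: bm_mul => //; exact: bm_cst.
move=> x _.
have sM0 : 0 <= \sum_(n < M) f n x by apply: sumr_ge0 => n _.
have hs := @sum_split _ (fun n => f n x) _ _ MN.
rewrite /= in hs.
have [Ux|nUx] := pselect (U x).
  rewrite mem_set // mulr1.
  apply: le_trans (@amgm _ _ _ a0).
  by rewrite lerBlDr lerDl.
rewrite memNset // mulr0 addr0 hs.
have -> : \sum_(M <= n < N) f n x = 0.
  rewrite big_nat_cond big1 // => n /andP[/andP[Mn _] _]; apply: hE => Enx.
  by apply: nUx; exists n.
by rewrite addr0 subrr divr_ge0 // ?sqr_ge0 // mulr_ge0 // ltW.
Qed.

Lemma am_inv (R : realType) (x Q p : R) : 0 < x -> 0 <= Q -> 0 <= p ->
  (forall a, 0 < a -> x <= Q / (2 * a) + a / 2 * p) -> x ^+ 2 <= Q * p.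
Proof.
move=> x0 Q0 p0 H.
have [Qe|Qp] := eqVneq Q 0.
  have q0 : 0 < p + 1 by rewrite ltr_wpDl.
  have := H (x / (p + 1)) (divr_gt0 x0 q0).
  rewrite Qe mul0r add0r.
  have -> : x / (p + 1) / 2 * p = x - x * (p + 2) / (2 * (p + 1)).
    by field; rewrite gt_eqF.
  move=> h.
  have : 0 < x * (p + 2) / (2 * (p + 1)).
    by rewrite divr_gt0 // ?mulr_gt0 // ltr_wpDl.
  lra.
have Qg : 0 < Q by rewrite lt_neqAle eq_sym Qp.
have := H (Q / x) (divr_gt0 Qg x0).
have -> : Q / (2 * (Q / x)) = x / 2 by field; rewrite gt_eqF // gt_eqF.
have -> : Q / x / 2 * p = Q * p / (2 * x) by field; rewrite gt_eqF.
rewrite -lerBlDl => h.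
have e1 : x ^+ 2 = (x - x / 2) * (2 * x) by field.
have e2 : Q * p = Q * p / (2 * x) * (2 * x) by field; rewrite gt_eqF.
rewrite e1 e2 ler_pM2r // mulr_gt0 //.
Qed.

Lemma near_ex (P : nat -> Prop) :
  (\forall n \near \oo, P n) -> exists N, forall n, (N <= n)%N -> P n.
Proof. by move=> [N _ H]; exists N. Qed.
Arguments near_ex {P}.

Lemma Ns_ge (Ns : nat -> nat) : {homo Ns : i j / (i < j)%N} -> forall j, (j <= Ns j)%N.
Proof.
move=> hN; elim => // j IH; exact: leq_ltn_trans IH (hN _ _ (ltnSn j)).
Qed.

Lemma near_Ns (Ns : nat -> nat) : {homo Ns : i j / (i < j)%N} ->
  forall P : nat -> Prop, (\forall N \near \oo, P N) -> \forall j \near \oo, P (Ns j).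
Proof.
move=> hN P [N0 _ H]; exists N0 => // j /= jN; apply: H.
by rewrite /= (leq_trans jN) // Ns_ge.
Qed.

Lemma cvg_Ns (R : realType) (Ns : nat -> nat) : {homo Ns : i j / (i < j)%N} ->
  forall (u : nat -> R) (l : R), u @ \oo --> l -> (fun j => u (Ns j)) @ \oo --> l.
Proof. by move=> hN u l h P /h; exact: near_Ns. Qed.

Lemma cvg_Nsy (R : realType) (Ns : nat -> nat) : {homo Ns : i j / (i < j)%N} ->
  forall (u : nat -> R), u @ \oo --> +oo -> (fun j => u (Ns j)) @ \oo --> +oo.
Proof. by move=> hN u h P /h; exact: near_Ns. Qed.

Lemma asym (R : realType) (A g d al : nat -> R) (cM K C k Mb : R) :
  A @ \oo --> +oo -> g @ \oo --> (0:R) -> al @ \oo --> (0:R) ->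
  (\forall j \near \oo, `|d j| <= Mb) -> 0 <= k -> k * C < 1 ->
  \forall j \near \oo, 0 < A j /\
     0 < (1 + g j) * A j + d j - cM /\
     0 < ((1 + g j) * A j + d j - cM) ^+ 2 - k * (2 * A j * ((1 + g j) * A j + d j)
        + (C - 2) * A j ^+ 2 + K + al j * ((1 + g j) * A j + d j) ^+ 2).
Proof.
move=> hA hg hal hd k0 kC.
have Apos : \forall j \near \oo, 0 < A j by move: hA => /cvgryPgt; apply.
set iA := fun j => (A j)^-1.
have hiA : iA @ \oo --> (0:R) by apply/(gtr0_cvgV0 Apos).
have hdiA : (fun j => d j * iA j) @ \oo --> (0:R).
  apply: (@squeeze_cvgr _ _ _ _ (fun j => - Mb * iA j) (fun j => Mb * iA j)).
  - case: (near_ex Apos) => N1 H1; case: (near_ex hd) => N2 H2.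
    exists (N1 + N2)%N => // j /= hj.
    have a1 := H1 j (leq_trans (leq_addr _ _) hj).
    have a2 := H2 j (leq_trans (leq_addl _ _) hj).
    have ia : 0 < iA j by rewrite /iA invr_gt0.
    move: a2; rewrite ler_norml => /andP[d1 d2].
    by rewrite ler_pM2r // ler_pM2r // d1 d2.
  - have -> : (0:R) = - Mb * 0 by rewrite mulr0.
    by apply: cvgM => //; exact: cvg_cst.
  - have -> : (0:R) = Mb * 0 by rewrite mulr0.
    by apply: cvgM => //; exact: cvg_cst.
have hv : (fun j => 1 + g j + d j * iA j) @ \oo --> (1 + 0 + 0 : R).
  by apply: cvgD; [apply: cvgD; [exact: cvg_cst | exact: hg] | exact: hdiA].
have hu : (fun j => (1 + g j + d j * iA j) - cM * iA j) @ \oo --> (1 + 0 + 0 - cM * 0 : R).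
  by apply: cvgB => //; apply: cvgM => //; exact: cvg_cst.
rewrite !addr0 mulr0 subr0 in hv hu.
set u := (fun j => _ - _) in hu.
set v := (fun j => _ + _) in hv.
have hh : (fun j => u j * u j - k * (2 * v j + (C - 2) + K * (iA j * iA j) + al j * (v j * v j)))
   @ \oo --> (1 * 1 - k * (2 * 1 + (C - 2) + K * (0 * 0) + 0 * (1 * 1)) : R).
  apply: cvgB; first exact: (cvgM hu hu).
  apply: cvgM; first exact: cvg_cst.
  apply: cvgD; last exact: (cvgM hal (cvgM hv hv)).
  apply: cvgD; last by apply: cvgM; [exact: cvg_cst | exact: (cvgM hiA hiA)].
  apply: cvgD; last exact: cvg_cst.
  by apply: cvgM => //; exact: cvg_cst.
have L0 : (0:R) < 1 * 1 - k * (2 * 1 + (C - 2) + K * (0 * 0) + 0 * (1 * 1)).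
  have -> : 1 * 1 - k * (2 * 1 + (C - 2) + K * (0 * 0) + 0 * (1 * 1)) = 1 - k * C :> R by ring.
  by rewrite subr_gt0.
have hupos : \forall j \near \oo, 0 < u j by apply: (cvgr_gt _ hu).
have hhpos : \forall j \near \oo, 0 < u j * u j - k * (2 * v j + (C - 2) + K * (iA j * iA j) + al j * (v j * v j)) by apply: (cvgr_gt _ hh).
case: (near_ex Apos) => N1 H1; case: (near_ex hupos) => N2 H2; case: (near_ex hhpos) => N3 H3.
exists (N1 + N2 + N3)%N => // j /= hj.
have a1 := H1 j (leq_trans (leq_trans (leq_addr _ _) (leq_addr _ _)) hj).
have a2 := H2 j (leq_trans (leq_trans (leq_addl _ _) (leq_addr _ _)) hj).
have a3 := H3 j (leq_trans (leq_addl _ _) hj).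
rewrite /u /v /iA /= in a2 a3.
have An : A j != 0 by rewrite gt_eqF.
split => //; split.
  have -> : (1 + g j) * A j + d j - cM = (1 + g j + d j / A j - cM / A j) * A j by field.
  by rewrite mulr_gt0.
have -> : ((1 + g j) * A j + d j - cM) ^+ 2 - k * (2 * A j * ((1 + g j) * A j + d j)
        + (C - 2) * A j ^+ 2 + K + al j * ((1 + g j) * A j + d j) ^+ 2) =
  ((1 + g j + d j / A j - cM / A j) * (1 + g j + d j / A j - cM / A j) -
   k * (2 * (1 + g j + d j / A j) + (C - 2) + K * (1 / A j * (1 / A j)) +
   al j * ((1 + g j + d j / A j) * (1 + g j + d j / A j)))) * (A j * A j).
  by field.
by rewrite mulr_gt0 // ?mulr_gt0 //; move: a3; rewrite !mul1r.
Qed.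

Lemma final_arith (R : realType) (kk p Q A B cM C M0 Mbe al be VNmu VNll Ql SS : R) :
 0 <= kk -> 0 <= Q ->
 (B - cM) ^+ 2 <= Q * p ->
 0 < (B - cM) ^+ 2 - kk * (2 * A * B + (C - 2) * A ^+ 2 + (M0 + Mbe) + al * B ^+ 2) ->
 VNmu = VNll + al * B ^+ 2 + be ->
 VNmu = Q - 2 * A * B + A ^+ 2 ->
 VNll = Ql - 2 * A * A + A ^+ 2 ->
 Ql = SS -> SS <= C * A ^+ 2 + M0 -> be <= Mbe -> kk <= p.
Proof.
move=> k0 Q0 hx2 h0 eV hVmu hVll hQl hM bbe.
have e2 : 2 * A * A = 2 * A ^+ 2 by rewrite expr2 mulrA.
rewrite e2 hQl in hVll.
have hQW : Q <= 2 * A * B + (C - 2) * A ^+ 2 + (M0 + Mbe) + al * B ^+ 2.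
  have e3 : C * A ^+ 2 - 2 * A ^+ 2 = (C - 2) * A ^+ 2 by ring.
  lra.
set W := 2 * A * B + (C - 2) * A ^+ 2 + (M0 + Mbe) + al * B ^+ 2 in hQW h0.
set x2 := (B - cM) ^+ 2 in hx2 h0.
have h1 : kk * Q <= kk * W by apply: ler_wpM2l.
have h2 : kk * Q < Q * p by lra.
have Qpos : 0 < Q.
  rewrite lt_def Q0 andbT; apply/eqP => Qe.
  move: h2; rewrite Qe mul0r mulr0; lra.
by rewrite mulrC ltr_pM2l // in h2; apply: ltW.
Qed.

Arguments final_arith {R kk p Q A B cM C M0 Mbe al be VNmu VNll Ql SS}.

Lemma leq5 (a b c d e : nat) :
  [/\ (a <= a + b + c + d + e)%N, (b <= a + b + c + d + e)%N, (c <= a + b + c + d + e)%N,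
   (d <= a + b + c + d + e)%N & (e <= a + b + c + d + e)%N].
Proof. split; lia. Qed.

Theorem lemma2p3 (R : realType) (k : nat)
  (lam : {measure set (k.-tuple R) -> \bar R})
  (mu : probability (k.-tuple R) R)
  (E : nat -> set (k.-tuple R)) (C : R)
  (f : nat -> k.-tuple R -> R) :
  is_lebesgue lam ->
  mu (@cube R k) = 1%E ->
  (forall n, measurable (E n) /\ bounded_tset (E n)) ->
  1 <= C ->
  (forall n, measurable_fun setT (f n)) ->
  (forall n x, 0 <= f n x) ->
  (forall n, exists M : R, forall x, f n x <= M) ->
  (forall n x, ~ E n x -> f n x = 0) ->
  ETP lam mu f ->
  VTP lam mu f ->
  (fun N => EN lam f N) @ \oo --> +oo ->
  (exists M : R, forall N : nat,
     \sum_(m < N) \sum_(n < N) nuf lam (fun x => f m x * f n x)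
       <= C * (EN lam f N) ^+ 2 + M) ->
  ((C^-1)%:E <= mu (lim_sup_set E))%E.
Proof.
move=> hl mu1 hE C1 mf f0 fb fsupp [a [b [ha [[Mb hb] hetp]]]]
  [Ns [al [be [hNs [hal [[Mbe hbe] hvtp]]]]]] hinf [M0 hM0].
have hf : forall n, bm (f n).
  move=> n; split => //; case: (fb n) => Mn h; exists Mn => x; rewrite ger0_norm //.
have mE : forall n, measurable (E n) by move=> n; case: (hE n).
have lam1 := @lam_cube R k lam hl.
have C0 : 0 < C by apply: lt_le_trans C1.
have mufin : (mu (@cube R k) < +oo)%E by rewrite mu1 ltry.
have lamfin : (lam (@cube R k) < +oo)%E by rewrite lam1 ltry.
have claim : forall M, C^-1 <= fine (mu ((\bigcup_(j >= M) E j) `&` @cube R k)).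
  move=> M; set p := fine _.
  have p0 : 0 <= p by apply: fine_ge0.
  apply/ler_addgt0Pr => e e0.
  set kk := C^-1 - e.
  have [kneg|kpos] := ltP kk 0.
    rewrite /kk in kneg; lra.
  suff : kk <= p by rewrite /kk; lra.
  have kC : kk * C < 1.
    rewrite /kk mulrBl mulVf ?gt_eqF //.
    have : 0 < e * C by rewrite mulr_gt0.
    lra.
  set cM := EN mu f M.
  have := @asym R (fun j => EN lam f (Ns j)) (fun j => a (Ns j)) (fun j => b (Ns j)) al
     cM (M0 + Mbe) C kk Mb (@cvg_Nsy R Ns hNs _ hinf) (@cvg_Ns R Ns hNs _ _ ha) hal (@near_Ns Ns hNs _ hb) kpos kC.
  case/near_ex => N1 H1.
  case: (near_ex (@near_Ns Ns hNs _ hetp)) => N2 H2.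
  case: (near_ex hvtp) => N3 H3.
  case: (near_ex hbe) => N4 H4.
  set j := (N1 + N2 + N3 + N4 + M)%N.
  have [l1 l2 l3 l4 l5] := leq5 N1 N2 N3 N4 M.
  have [A0 [x0 h0]] := H1 j l1.
  have eB := H2 j l2.
  have eV := H3 j l3.
  have bbe := H4 j l4.
  have MN : (M <= Ns j)%N by exact: leq_trans l5 (@Ns_ge Ns hNs j).
  simpl in eB, A0, x0, h0.
  rewrite -eB in x0 h0.
  set N := Ns j in eB eV x0 h0 MN A0.
  set A := EN lam f N in eB eV x0 h0 A0.
  set B := EN mu f N in eB eV x0 h0.
  set Q := Rintegral mu (@cube R k) (fun x => (\sum_(n < N) f n x) ^+ 2).
  have Q0 : 0 <= Q by apply: Rintegral_ge0 => x _; exact: sqr_ge0.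
  have hx2 : (B - cM) ^+ 2 <= Q * p.
    apply: am_inv => // a0 ha0.
    exact: (@key R k mu f E M N a0 mufin hf f0 fsupp mE MN ha0).
  have hVmu := @VN_expand R k lam mu f N mu1 hf.
  have hVll := @VN_expand R k lam lam f N lam1 hf.
  have hQl := @Rint_sq R k lam f N lamfin hf.
  have hM := hM0 N.
  have bbe' : be j <= Mbe by apply: le_trans (ler_norm _) bbe.
  exact: (final_arith kpos Q0 hx2 h0 eV hVmu hVll hQl hM bbe').
have fin0 : (mu (\bigcup_(j >= 0) E j) < +oo)%E.
  apply: le_lt_trans (probability_le1 mu _) (ltry 1).
  by apply: bigcup_measurable => j _; exact: mE.
have hc := lim_sup_set_cvg mu E mE fin0.
rewrite -(cvg_lim _ hc) //.
apply: lime_ge; first by apply/cvg_ex; eexists; exact: hc.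
apply: nearW => M.
have mU : measurable (\bigcup_(j >= M) E j) by apply: bigcup_measurable => j _; exact: mE.
apply: le_trans (measureIl mu mU (@cube_meas R k)).
rewrite -(fineK (fin_num_measure mu _ (measurableI _ _ mU (@cube_meas R k)))) lee_fin.
exact: claim.
Qed.
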